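(* Let $A\in\mathbb{R}^{n\times n}$ be symmetric positive-semidefinite, $b\in\mathbb{R}^n$, $g:\mathbb{R}^n\to(-\infty,\infty]$ proper, lower semicontinuous and convex, and $\gamma>0$ such that $I-\gamma A$ is positive-definite. Set $Q:=(I-\gamma A)^{-1}$, $c:=\gamma Qb$, $P:=Q-I$, and $\psi(u):=\frac12\langle Pu,u\rangle+\langle c,u\rangle+\gamma e_\gamma g(u)$. Then for all $u,w,z\in\mathbb{R}^n$: $z\in\partial^2\psi(u)(w)$ if and only if $\frac1\gamma(z-Pw)\in\partial^2g\Big(\operatorname{Prox}_{\gamma g}(u),\frac1\gamma\big(u-\operatorname{Prox}_{\gamma g}(u)\big)\Big)(Qw-z)$.
   Context: Moreau envelope and proximal map: $e_\gamma g(x):=\inf_y\{g(y)+\frac1{2\gamma}\|y-x\|^2\}$, $\operatorname{Prox}_{\gamma g}(x):=\operatorname{argmin}_y\{g(y)+\frac1{2\gamma}\|y-x\|^2\}$ ($\psi$ is continuously differentiable). Regular normal cone: $\widehat N_\Omega(\bar z):=\{v\mid \limsup_{z\to\bar z,\,z\in\Omega}\langle v,z-\bar z\rangle/\|z-\bar z\|\le 0\}$; limiting normal cone $N_\Omega(\bar z)$: all $v$ with $z_k\to\bar z$, $z_k\in\Omega$, $v_k\to v$, $v_k\in\widehat N_\Omega(z_k)$. Coderivative of $F:\mathbb{R}^n\rightrightarrows\mathbb{R}^m$: $D^*F(\bar x,\bar y)(v):=\{u\mid(u,-v)\in N_{\operatorname{gph}F}(\bar x,\bar y)\}$. Second-order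 subdifferential: for $\bar v\in\partial g(\bar x)$ (convex subdifferential), $\partial^2g(\bar x,\bar v)(w):=D^*(\partial g)(\bar x,\bar v)(w)$; for the $\mathcal{C}^1$ function $\psi$, $\partial^2\psi(u)(w):=D^*(\nabla\psi)(u,\nabla\psi(u))(w)$. *)

(* Defs.v *)
From HB Require Import structures.
From mathcomp Require Import all_boot all_order all_algebra.
From mathcomp Require Import all_classical all_reals all_analysis.
Set Implicit Arguments.
Unset Strict Implicit.
Unset Printing Implicit Defensive.
Import Order.TTheory GRing.Theory Num.Theory.
Local Open Scope classical_set_scope.
Local Open Scope ring_scope.

Section Defs.
Variables (R : realType) (n : nat).
Local Notation V := 'cV[R]_n.

Definition dot (u v : V) : R := \sum_(i < n) u i 0 * v i 0.
Definition enorm (u : V) : R := Num.sqrt (dot u u).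

Definition dot2 (p q : V * V) : R := dot p.1 q.1 + dot p.2 q.2.
Definition enorm2 (p : V * V) : R := Num.sqrt (dot2 p p).
Definition sub2 (p q : V * V) : V * V := (p.1 - q.1, p.2 - q.2).

Definition sym_mx (A : 'M[R]_n) : Prop := A^T = A.
Definition psd (A : 'M[R]_n) : Prop := forall x : V, 0 <= dot x (A *m x).
Definition pd (A : 'M[R]_n) : Prop := forall x : V, x != 0 -> 0 < dot x (A *m x).

Definition proper_fun (g : V -> \bar R) : Prop :=
  (exists x, g x < +oo)%E /\ (forall x, -oo < g x)%E.
Definition lsc (g : V -> \bar R) : Prop :=
  forall x (a : R), (a%:E < g x)%E ->
    exists2 d : R, 0 < d & forall y : V, enorm (y - x) < d -> (a%:E < g y)%E.
Definition convex_fun (g : V -> \bar R) : Prop :=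
  forall (x y : V) (t : R), 0 <= t <= 1 ->
    (g (t *: x + (1 - t) *: y)%R <= t%:E * g x + (1 - t)%:E * g y)%E.

Definition subdiff (g : V -> \bar R) (x v : V) : Prop :=
  g x \is a fin_num /\ forall y, (g x + (dot v (y - x)%R)%:E <= g y)%E.

Definition moreau (gamma : R) (g : V -> \bar R) (x : V) : \bar R :=
  ereal_inf (range (fun y => g y + ((2 * gamma)^-1 * enorm (y - x) ^+ 2)%R%:E)%E).
Definition prox (gamma : R) (g : V -> \bar R) (x : V) : V :=
  xget 0 [set p | forall y,
    (g p + ((2 * gamma)^-1 * enorm (p - x) ^+ 2)%R%:E <=
     g y + ((2 * gamma)^-1 * enorm (y - x) ^+ 2)%R%:E)%E].

Definition is_grad (f : V -> R) (x v : V) : Prop :=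
  forall eps : R, 0 < eps -> exists2 d : R, 0 < d & forall h : V,
    enorm h < d -> `|f (x + h) - f x - dot v h| <= eps * enorm h.
Definition grad (f : V -> R) (x : V) : V := xget 0 [set v | is_grad f x v].

Definition reg_normal (Om : set (V * V)) (zb v : V * V) : Prop :=
  forall eps : R, 0 < eps -> exists2 d : R, 0 < d & forall z, Om z ->
    enorm2 (sub2 z zb) < d -> dot2 v (sub2 z zb) <= eps * enorm2 (sub2 z zb).

Definition cvg2 (s : nat -> V * V) (l : V * V) : Prop :=
  forall eps : R, 0 < eps -> exists N, forall k, (N <= k)%N ->
    enorm2 (sub2 (s k) l) < eps.

Definition lim_normal (Om : set (V * V)) (zb v : V * V) : Prop :=
  exists (zs vs : nat -> V * V),
    (forall k, Om (zs k)) /\ (forall k, reg_normal Om (zs k) (vs k)) /\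
    cvg2 zs zb /\ cvg2 vs v.

Definition coderiv (gphF : set (V * V)) (x y v u : V) : Prop :=
  lim_normal gphF (x, y) (u, - v).

Definition sub2diff (g : V -> \bar R) (x vb w z : V) : Prop :=
  coderiv [set p | subdiff g p.1 p.2] x vb w z.
Definition hess2 (f : V -> R) (u w z : V) : Prop :=
  coderiv [set p | p.2 = grad f p.1] u (grad f u) w z.

End Defs.

(* Main.v *)
Require Import Defs.
From HB Require Import structures.
From mathcomp Require Import all_boot all_order all_algebra.
From mathcomp Require Import all_classical all_reals all_analysis.
From mathcomp Require Import ring lra.
Import Order.TTheory GRing.Theory Num.Theory.
Local Open Scope classical_set_scope.
Local Open Scope ring_scope.
Import numFieldNormedType.Exports.
Set Implicit Arguments. Unset Strict Implicit. Unset Printing Implicit Defensive.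
Section Euclid.
Variables (R : realType) (n : nat).
Local Notation V := 'cV[R]_n.
Implicit Types (u v w x y : V).

Lemma dotC u v : dot u v = dot v u.
Proof. by apply: eq_bigr => i _; rewrite mulrC. Qed.
Lemma dotDl u v w : dot (u + v) w = dot u w + dot v w.
Proof. by rewrite /dot -big_split; apply: eq_bigr => i _; rewrite !mxE mulrDl. Qed.
Lemma dotDr u v w : dot w (u + v) = dot w u + dot w v.
Proof. by rewrite dotC dotDl !(dotC w). Qed.
Lemma dotZl a u v : dot (a *: u) v = a * dot u v.
Proof. by rewrite /dot mulr_sumr; apply: eq_bigr => i _; rewrite !mxE mulrA. Qed.
Lemma dotZr a u v : dot v (a *: u) = a * dot v u.
Proof. by rewrite dotC dotZl dotC. Qed.
Lemma dotNl u v : dot (- u) v = - dot u v.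
Proof. by rewrite -scaleN1r dotZl mulN1r. Qed.
Lemma dotNr u v : dot v (- u) = - dot v u.
Proof. by rewrite dotC dotNl dotC. Qed.
Lemma dotBl u v w : dot (u - v) w = dot u w - dot v w.
Proof. by rewrite dotDl dotNl. Qed.
Lemma dotBr u v w : dot w (u - v) = dot w u - dot w v.
Proof. by rewrite dotDr dotNr. Qed.
Lemma dot0l u : dot 0 u = 0.
Proof. by rewrite /dot big1 // => i _; rewrite mxE mul0r. Qed.
Lemma dot0r u : dot u 0 = 0.
Proof. by rewrite dotC dot0l. Qed.
Lemma dot_ge0 u : 0 <= dot u u.
Proof. by rewrite /dot sumr_ge0 // => i _; rewrite -expr2 sqr_ge0. Qed.
Lemma dot_eq0 u : dot u u = 0 -> u = 0.
Proof.
move=> /eqP; rewrite /dot psumr_eq0; last by move=> i _; rewrite -expr2 sqr_ge0.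
move=> /allP H; apply/matrixP => i j; rewrite (ord1 j) mxE.
have := H i (mem_index_enum _); rewrite mulf_eq0 orbb => /eqP ->. done.
Qed.
Lemma dot_mx (M : 'M[R]_n) u v : dot (M *m u) v = dot u (M^T *m v).
Proof.
rewrite /dot. under eq_bigr do rewrite !mxE big_distrl /=.
rewrite exchange_big /=; apply: eq_bigr => j _.
rewrite !mxE big_distrr /=; apply: eq_bigr => i _; rewrite !mxE; ring.
Qed.

Lemma enorm_ge0 u : 0 <= enorm u.
Proof. exact: sqrtr_ge0. Qed.
Lemma enorm_sq u : enorm u ^+ 2 = dot u u.
Proof. by rewrite /enorm sqr_sqrtr // dot_ge0. Qed.
Lemma enorm0 : enorm (0 : V) = 0.
Proof. by rewrite /enorm dot0l sqrtr0. Qed.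
Lemma enorm_eq0 u : enorm u = 0 -> u = 0.
Proof. by move=> H; apply: dot_eq0; rewrite -enorm_sq H expr0n. Qed.

Lemma cs_sq u v : dot u v ^+ 2 <= dot u u * dot v v.
Proof.
have [v0|vn0] := eqVneq (dot v v) 0.
  by rewrite (dot_eq0 v0) dot0r dot0l expr0n mulr0.
have vp : 0 < dot v v by rewrite lt_def vn0 dot_ge0.
have := dot_ge0 (dot v v *: u - dot u v *: v).
rewrite !(dotBl, dotBr, dotZl, dotZr) (dotC v u) => H.
have : 0 <= dot v v * (dot u u * dot v v - dot u v ^+ 2).
  by apply: (le_trans H); rewrite le_eqVlt; apply/orP; left; apply/eqP; ring.
by rewrite pmulr_rge0 // subr_ge0.
Qed.
Lemma cs u v : `|dot u v| <= enorm u * enorm v.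
Proof.
rewrite -[leRHS]ger0_norm ?mulr_ge0 ?enorm_ge0 //.
rewrite -ler_sqr ?normr_ge0 // !real_normK ?num_real // exprMn !enorm_sq; exact: cs_sq.
Qed.
Lemma cs' u v : dot u v <= enorm u * enorm v.
Proof. exact: le_trans (ler_norm _) (cs u v). Qed.
Lemma enormD u v : enorm (u + v) <= enorm u + enorm v.
Proof.
rewrite -ler_sqr ?nnegrE ?addr_ge0 ?enorm_ge0 //.
rewrite enorm_sq dotDl !dotDr (dotC v u) sqrrD !enorm_sq.
have := cs' u v; lra.
Qed.
Lemma enormZ a u : enorm (a *: u) = `|a| * enorm u.
Proof. by rewrite /enorm dotZl dotZr mulrA -expr2 sqrtrM ?sqr_ge0 // sqrtr_sqr. Qed.
Lemma enormN u : enorm (- u) = enorm u.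
Proof. by rewrite -scaleN1r enormZ normrN1 mul1r. Qed.
Lemma enormB u v : enorm (u - v) = enorm (v - u).
Proof. by rewrite -enormN opprB. Qed.
Lemma coord_le u i : `|u i 0| <= enorm u.
Proof.
rewrite -[leRHS]ger0_norm ?enorm_ge0 // -ler_sqr ?normr_ge0 // !real_normK ?num_real //.
rewrite enorm_sq /dot (bigD1 i) //= -expr2 lerDl sumr_ge0 // => j _; rewrite -expr2 sqr_ge0 //.
Qed.
Lemma enorm_le_sum u : enorm u <= \sum_i `|u i 0|.
Proof.
rewrite -ler_sqr ?nnegrE ?enorm_ge0 ?sumr_ge0 // enorm_sq /dot.
rewrite expr2 mulr_suml; apply: ler_sum => i _.
rewrite mulr_sumr (bigD1 i) //= -normrM ler_wpDr ?ler_norm ?sumr_ge0 //.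
Qed.

Lemma mx_bound (M : 'M[R]_n) : exists2 K, 0 <= K & forall u, enorm (M *m u) <= K * enorm u.
Proof.
exists (Num.sqrt (\sum_i dot (row i M)^T (row i M)^T)); first exact: sqrtr_ge0.
have dg : forall i : 'I_n, true -> 0 <= dot (row i M)^T (row i M)^T by move=> i _; exact: dot_ge0.
move=> u; rewrite /enorm -sqrtrM ?sumr_ge0 //.
rewrite ler_sqrt ?mulr_ge0 ?sumr_ge0 ?dot_ge0 //.
rewrite {1}/dot mulr_suml; apply: ler_sum => i _.
have -> : (M *m u) i 0 = dot (row i M)^T u.
  by rewrite !mxE /dot; apply: eq_bigr => j _; rewrite !mxE.
by rewrite -expr2; exact: cs_sq.
by move=> i _; rewrite -expr2 sqr_ge0.
Qed.
End Euclid.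
Section Pairs.
Variables (R : realType) (n : nat).
Local Notation V := 'cV[R]_n.
Implicit Types (p q : V * V).

Lemma dot2_ge0 p : 0 <= dot2 p p.
Proof. by rewrite /dot2 addr_ge0 ?dot_ge0. Qed.
Lemma enorm2_ge0 p : 0 <= enorm2 p.
Proof. exact: sqrtr_ge0. Qed.
Lemma enorm2_sq p : enorm2 p ^+ 2 = dot2 p p.
Proof. by rewrite /enorm2 sqr_sqrtr // dot2_ge0. Qed.
Lemma enorm2_ge1 p : enorm p.1 <= enorm2 p.
Proof. by rewrite ler_sqrt ?dot2_ge0 // /dot2 lerDl dot_ge0. Qed.
Lemma enorm2_ge2 p : enorm p.2 <= enorm2 p.
Proof. by rewrite ler_sqrt ?dot2_ge0 // /dot2 lerDr dot_ge0. Qed.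
Lemma enorm2_le p : enorm2 p <= enorm p.1 + enorm p.2.
Proof.
rewrite -ler_sqr ?nnegrE ?addr_ge0 ?enorm_ge0 ?enorm2_ge0 //.
rewrite enorm2_sq sqrrD !enorm_sq /dot2.
have := mulr_ge0 (enorm_ge0 p.1) (enorm_ge0 p.2); lra.
Qed.

Definition blk (M1 M2 M3 M4 : 'M[R]_n) q : V * V :=
  (M1 *m q.1 + M2 *m q.2, M3 *m q.1 + M4 *m q.2).

Lemma blk_bound M1 M2 M3 M4 : exists2 K, 0 < K & forall q, enorm2 (blk M1 M2 M3 M4 q) <= K * enorm2 q.
Proof.
have [K1 K10 H1] := mx_bound M1; have [K2 K20 H2] := mx_bound M2.
have [K3 K30 H3] := mx_bound M3; have [K4 K40 H4] := mx_bound M4.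
exists (K1 + K2 + K3 + K4 + 1); first lra.
move=> q; apply: (le_trans (enorm2_le _)) => /=.
have a1 := le_trans (enormD _ _) (lerD (H1 q.1) (H2 q.2)).
have a2 := le_trans (enormD _ _) (lerD (H3 q.1) (H4 q.2)).
have e1 := enorm2_ge1 q; have e2 := enorm2_ge2 q.
have f1 := ler_wpM2l K10 e1; have f2 := ler_wpM2l K20 e2.
have f3 := ler_wpM2l K30 e1; have f4 := ler_wpM2l K40 e2.
have := enorm2_ge0 q; lra.
Qed.

Lemma blk_sub M1 M2 M3 M4 p q :
  blk M1 M2 M3 M4 (sub2 p q) = sub2 (blk M1 M2 M3 M4 p) (blk M1 M2 M3 M4 q).
Proof.
rewrite /blk /sub2 /= !mulmxBr; congr pair;
  by rewrite !opprD !addrA; congr (_ + _); rewrite -!addrA; congr (_ + _); rewrite addrC.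
Qed.

Definition blkT (mu : R) (M1 M2 M3 M4 : 'M[R]_n) :=
  blk (mu *: M1^T) (mu *: M3^T) (mu *: M2^T) (mu *: M4^T).

Lemma blkT_adj mu M1 M2 M3 M4 v q :
  dot2 (blkT mu M1 M2 M3 M4 v) q = mu * dot2 v (blk M1 M2 M3 M4 q).
Proof.
rewrite /dot2 /blkT /blk /= !dotDl !dotDr !dot_mx !linearZ /= !trmxK -!scalemxAl !dotZr.
ring.
Qed.

Lemma sub2_norm0 p : enorm2 (sub2 p p) = 0.
Proof. by rewrite /sub2 !subrr /enorm2 /dot2 !dot0l addr0 sqrtr0. Qed.

Section Transfer.
Variables (Om Om' : set (V * V)) (F G : V * V -> V * V) (S1 S2 S3 S4 T1 T2 T3 T4 : 'M[R]_n) (mu : R).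
Hypotheses (mu0 : 0 < mu) (HF : forall z, Om z -> Om' (F z)) (HG : forall z, Om' z -> Om (G z))
  (GF : forall z, G (F z) = z)
  (Glin : forall a b, sub2 (G a) (G b) = blk S1 S2 S3 S4 (sub2 a b))
  (Flin : forall a b, sub2 (F a) (F b) = blk T1 T2 T3 T4 (sub2 a b)).

Lemma reg_transfer zb v : reg_normal Om zb v ->
  reg_normal Om' (F zb) (blkT mu S1 S2 S3 S4 v).
Proof.
move=> Hv eps e0.
have [K K0 HK] := blk_bound S1 S2 S3 S4.
have [d d0 Hd] := Hv (eps / (mu * K)) (divr_gt0 e0 (mulr_gt0 mu0 K0)).
exists (d / K); first exact: divr_gt0.
move=> z' Oz' Hz'.
have E : sub2 (G z') zb = blk S1 S2 S3 S4 (sub2 z' (F zb)) by rewrite -Glin GF.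
have Hn := HK (sub2 z' (F zb)).
have Hlt : enorm2 (sub2 (G z') zb) < d.
  rewrite E; apply: (le_lt_trans Hn).
  by rewrite -ltr_pdivlMl // mulrC.
have := Hd _ (HG Oz') Hlt; rewrite E => H2.
rewrite blkT_adj.
have H3 := ler_wpM2l (ltW mu0) H2.
apply: (le_trans H3).
have -> : mu * (eps / (mu * K) * enorm2 (blk S1 S2 S3 S4 (sub2 z' (F zb)))) =
   (eps / K) * enorm2 (blk S1 S2 S3 S4 (sub2 z' (F zb))).
  by field; rewrite !gt_eqF.
have H4 : eps / K * enorm2 (blk S1 S2 S3 S4 (sub2 z' (F zb))) <= eps / K * (K * enorm2 (sub2 z' (F zb))).
  by apply: ler_wpM2l => //; rewrite ltW // divr_gt0.
apply: (le_trans H4); rewrite mulrA divfK ?gt_eqF //.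
Qed.

Lemma lim_transfer zb v : lim_normal Om zb v ->
  lim_normal Om' (F zb) (blkT mu S1 S2 S3 S4 v).
Proof.
move=> [zs [vs [Hz [Hr [Hcz Hcv]]]]].
exists (F \o zs), (blkT mu S1 S2 S3 S4 \o vs); split; first by move=> k; apply: HF.
split; first by move=> k; apply: reg_transfer.
have [K1 K10 HK1] := blk_bound T1 T2 T3 T4.
have [K2 K20 HK2] := blk_bound (mu *: S1^T) (mu *: S3^T) (mu *: S2^T) (mu *: S4^T).
split.
  move=> eps e0; have [N HN] := Hcz (eps / K1) (divr_gt0 e0 K10); exists N => k Nk /=.
  rewrite Flin; apply: (le_lt_trans (HK1 _)); by rewrite -ltr_pdivlMl // mulrC HN.
move=> eps e0; have [N HN] := Hcv (eps / K2) (divr_gt0 e0 K20); exists N => k Nk /=.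
rewrite /blkT -blk_sub; apply: (le_lt_trans (HK2 _)); by rewrite -ltr_pdivlMl // mulrC HN.
Qed.
End Transfer.
End Pairs.
Lemma real_cauchy (R : realType) (a : nat -> R) :
  (forall e, 0 < e -> exists N, forall j k, (N <= j)%N -> (N <= k)%N -> `|a j - a k| < e) ->
  exists l, forall e, 0 < e -> exists N, forall k, (N <= k)%N -> `|a k - l| < e.
Proof.
move=> H.
have : cvg (a @ \oo).
  apply: cauchy_cvg. apply/cauchy_exP => e e0.
  have [N HN] := H e e0. exists (a N).
  exists N => // k /= Nk. rewrite /ball /=. by rewrite HN.
move=> /cvgrPdist_lt Hl. exists (lim (a @ \oo)) => e e0.
have [N _ HN] := Hl e e0. exists N => k Nk. rewrite distrC. exact: HN.
Qed.

Lemma archi (R : realType) (x : R) : 0 < x -> exists N : nat, (N.+1%:R)^-1 < x.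
Proof.
move=> x0; exists (Num.truncn x^-1).
rewrite invf_plt ?posrE ?ltr0Sn //; exact: truncnS_gt.
Qed.

Section Prox.
Variables (R : realType) (n : nat) (g : 'cV[R]_n -> \bar R) (gamma : R).
Local Notation V := 'cV[R]_n.
Hypotheses (gp : proper_fun g) (gl : lsc g) (gc : convex_fun g) (g0 : 0 < gamma).

Definition hqf (u y : V) : R := (2 * gamma)^-1 * enorm (y - u) ^+ 2.
Definition Hf u y := (g y + (hqf u y)%:E)%E.

Lemma g_lb : exists C D, 0 <= D /\ forall y, ((C - D * enorm y)%:E <= g y)%E.
Proof.
have [[x0 Hx0] Hm] := gp.
case Ex0 : (g x0) => [r0| |]; last 2 first.
- by rewrite Ex0 in Hx0.
- by have := Hm x0; rewrite Ex0.
have [d d0 Hd] := gl (x := x0) (a := r0 - 1) (ltac:(rewrite Ex0 lte_fin; lra)).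
have D0 : 0 <= 2 / d by rewrite divr_ge0 // ltW.
exists (r0 - 1 - 2/d * enorm x0), (2/d); split => // y.
suff H1 : ((r0 - 1 - 2/d * enorm (y - x0))%:E <= g y)%E.
  apply: le_trans H1; rewrite lee_fin.
  have := enormD y (- x0); rewrite enormN => /(ler_wpM2l D0); lra.
case Egy : (g y) => [r| |]; last 2 first.
- exact: leey.
- by have := Hm y; rewrite Egy.
rewrite lee_fin.
set s := enorm (y - x0).
have s0 : 0 <= s by exact: enorm_ge0.
have [sd|ds] := ltP s d.
  have := Hd y sd; rewrite Egy lte_fin.
  have : 0 <= 2/d*s by rewrite mulr_ge0.
  lra.
have sp : 0 < s by exact: lt_le_trans ds.
set t := d / (2 * s).
have t0 : 0 < t by rewrite divr_gt0 // mulr_gt0.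
have t1 : t <= 1.
  by rewrite ler_pdivrMr ?mulr_gt0 //; lra.
set z := t *: y + (1 - t) *: x0.
have zx : z - x0 = t *: (y - x0) by apply/matrixP => i j; rewrite !mxE; ring.
have Hz : enorm (z - x0) < d.
  rewrite zx enormZ ger0_norm ?(ltW t0) // /t -/s.
  have -> : d / (2 * s) * s = d / 2 by field; rewrite gt_eqF.
  lra.
have := Hd z Hz.
have := gc y x0 (t := t) (ltac:(rewrite (ltW t0) t1 //)).
rewrite -/z Egy Ex0 -!EFinM -EFinD => Hc1 Hc2.
have Hc := lt_le_trans Hc2 Hc1; rewrite lte_fin in Hc.
have E1 : t * (2/d * s) = 1 by rewrite /t; field; rewrite !gt_eqF.
suff : t * (r0 - 1 - 2/d * s) <= t * r by rewrite ler_pM2l.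
lra.
Qed.
End Prox.
Section Prox2.
Variables (R : realType) (n : nat) (g : 'cV[R]_n -> \bar R) (gamma : R).
Local Notation V := 'cV[R]_n.
Hypotheses (gp : proper_fun g) (gl : lsc g) (gc : convex_fun g) (g0 : 0 < gamma).
Local Notation hq := (@hqf R n gamma).
Local Notation H := (@Hf R n g gamma).

Lemma hq_ge0 u y : 0 <= hq u y.
Proof.
rewrite /hqf; apply: mulr_ge0; last exact: sqr_ge0.
by rewrite invr_ge0 mulr_ge0 // ltW.
Qed.

Lemma g_fin_eq y a r : (g y + a%:E)%E = r%:E -> g y = (r - a)%:E.
Proof. by case: (g y) => // s /= [<-]; rewrite addrK. Qed.

Lemma H_lb u : exists m0, forall y, (m0%:E <= H u y)%E.
Proof.
have [C [D [D0 HC]]] := g_lb gp gl gc.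
exists (C - D * enorm u - gamma * D ^+ 2 / 2) => y.
have := HC y; rewrite /Hf; case: (g y) => [r| |] //=; last first.
  by move=> _; rewrite leey.
rewrite -EFinD !lee_fin => Hr.
set s := enorm (y - u).
have Hy : enorm y <= s + enorm u by have := enormD (y - u) u; rewrite subrK.
have HyD := ler_wpM2l D0 Hy.
have Eq : (2 * gamma)^-1 * (s - gamma * D) ^+ 2 = hq u y - D * s + gamma * D ^+ 2 / 2.
  by rewrite /hqf -/s; field; rewrite gt_eqF.
have : 0 <= (2 * gamma)^-1 * (s - gamma * D) ^+ 2 by rewrite mulr_ge0 ?sqr_ge0 // invr_ge0 mulr_ge0 // ltW.
lra.
Qed.

Lemma dot_mid (a b u : V) :
  dot ((2^-1 *: a + (1 - 2^-1) *: b) - u) ((2^-1 *: a + (1 - 2^-1) *: b) - u) =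
  2^-1 * dot (a - u) (a - u) + 2^-1 * dot (b - u) (b - u) - 4^-1 * dot (a - b) (a - b).
Proof.
rewrite /dot !mulr_sumr -big_split /= -sumrB; apply: eq_bigr => i _; by rewrite !mxE; field.
Qed.

Lemma hq_lip u y y' : hq u y' - enorm (y' - u) * enorm (y - y') / gamma <= hq u y.
Proof.
have E : y - u = (y' - u) + (y - y') by apply/matrixP=> i j; rewrite !mxE; ring.
rewrite /hqf !enorm_sq E.
have := cs (y' - u) (y - y').
have B0 := dot_ge0 (y - y').
move: (y' - u) (y - y') B0 => a b B0.
rewrite dotDl !dotDr (dotC b a). rewrite ler_norml => /andP[H1 _].
have k0 : 0 <= gamma^-1 by rewrite invr_ge0 ltW.
have F1 := ler_wpM2l k0 H1.
have F2 := mulr_ge0 k0 B0.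
rewrite invfM.
lra.
Qed.
Lemma hq_lip' u y y' X : enorm (y' - u) * enorm (y - y') / gamma <= X -> hq u y' - X <= hq u y.
Proof. move=> HX; apply: le_trans (hq_lip u y y'); exact: lerB. Qed.
End Prox2.
Section Prox3.
Variables (R : realType) (n : nat) (g : 'cV[R]_n -> \bar R) (gamma : R).
Local Notation V := 'cV[R]_n.
Hypotheses (gp : proper_fun g) (gl : lsc g) (gc : convex_fun g) (g0 : 0 < gamma).
Local Notation hq := (@hqf R n gamma).
Local Notation H := (@Hf R n g gamma).

Lemma enorm_lt_sq (v : V) e : 0 < e -> enorm v ^+ 2 < e ^+ 2 -> enorm v < e.
Proof. by move=> e0; rewrite ltr_sqr // nnegrE ?enorm_ge0 // ltW. Qed.

Lemma inv_mono (j N : nat) : (N <= j)%N -> (j.+1%:R : R)^-1 <= (N.+1%:R)^-1.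
Proof. by move=> Nj; rewrite lef_pV2 ?posrE ?ltr0Sn // ler_nat ltnS. Qed.

Lemma prox_ex u : exists p, forall y, (H u p <= H u y)%E.
Proof.
have [m0 Hm0] := H_lb gp gl gc g0 u.
have [[x0 Hx0] Hm] := gp.
case Ex0 : (g x0) => [r0| |]; last 2 first.
- by rewrite Ex0 in Hx0.
- by have := Hm x0; rewrite Ex0.
pose S := [set r : R | exists y, H u y = r%:E].
have hS : has_inf S.
  split; first by exists (r0 + hq u x0), x0; rewrite /Hf Ex0.
  exists m0 => r [y Hy]; by have := Hm0 y; rewrite Hy lee_fin.
pose m := inf S.
have Hge : forall y, (m%:E <= H u y)%E.
  move=> y; case Ey : (H u y) => [r| |].
  - by rewrite lee_fin; apply: (ge_inf hS.2); exists y.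
  - exact: leey.
  - by have := Hm0 y; rewrite Ey.
have [ek [ek0 [ekm eks]]] : exists ek : nat -> R, (forall k, 0 < ek k) /\
    (forall j k, (k <= j)%N -> ek j <= ek k) /\ (forall e, 0 < e -> exists N, ek N < e).
  exists (fun k => (k.+1%:R)^-1); split; first by move=> k; rewrite invr_gt0 ltr0Sn.
  split; first by move=> j k; exact: inv_mono.
  exact: archi.
have : forall k : nat, exists yr : V * R, H u yr.1 = yr.2%:E /\ yr.2 < m + ek k.
  move=> k; have [r [y Hy] Hr] := @inf_adherent _ S (ek k) (ek0 k) hS.
  by exists (y, r).
move=> /choice [f Hfk].
pose ys k := (f k).1; pose rs k := (f k).2.
have Hg : forall k, g (ys k) = (rs k - hq u (ys k))%:E.
  by move=> k; apply: g_fin_eq; exact: (Hfk k).1.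
have Hr : forall k, rs k < m + ek k by move=> k; exact: (Hfk k).2.
clearbody rs ys m.
have Hc : forall j k, enorm (ys j - ys k) ^+ 2 <= 4 * gamma * (ek j + ek k).
  move=> j k.
  pose mid := 2^-1 *: ys j + (1 - 2^-1) *: ys k.
  have Hcv := gc (ys j) (ys k) (t := 2^-1) (ltac:(by rewrite invr_ge0 ler0n /= invf_le1 ?ler1n)).
  rewrite !Hg -!EFinM -EFinD in Hcv.
  have := le_trans (Hge mid) (leeD2r (hq u mid)%:E Hcv); rewrite -EFinD lee_fin.
  have Em := dot_mid (ys j) (ys k) u.
  have Hj := Hr j; have Hk := Hr k.
  rewrite /hqf !enorm_sq -/mid Em.
  set A := dot (ys j - u) (ys j - u); set B := dot (ys k - u) (ys k - u).
  set Cc := dot (ys j - ys k) (ys j - ys k).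
  move=> Hmid.
  have : (2 * gamma)^-1 * (4^-1 * Cc) <= 2^-1 * (ek j + ek k).
    move: Hmid Hj Hk; rewrite /A /B; lra.
  have -> : (2 * gamma)^-1 * (4^-1 * Cc) = Cc / (8 * gamma) by field; rewrite gt_eqF.
  rewrite ler_pdivrMr ?mulr_gt0 // => H1.
  apply: (le_trans H1); rewrite le_eqVlt; apply/orP; left; apply/eqP; by field.
have Hcau : forall e, 0 < e -> exists N, forall j k, (N <= j)%N -> (N <= k)%N ->
    enorm (ys j - ys k) < e.
  move=> e e0.
  have [N HN] := eks (e^+2 / (16 * gamma)) (ltac:(by rewrite divr_gt0 ?exprn_gt0 ?mulr_gt0)).
  exists N => j k Nj Nk; apply: enorm_lt_sq => //.
  apply: (le_lt_trans (Hc j k)).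
  have := ekm _ _ Nj; have := ekm _ _ Nk.
  move: HN; set W := e^+2 / (16 * gamma) => HN H1 H2.
  have H3 : ek j + ek k < 2 * W by lra.
  have H4 : 4 * gamma * (ek j + ek k) < 4 * gamma * (2 * W) by rewrite ltr_pM2l ?mulr_gt0.
  have E : 4 * gamma * (2 * W) = e^+2 / 2 by rewrite /W; field; rewrite gt_eqF.
  have e2 : 0 < e^+2 by rewrite exprn_gt0.
  rewrite E in H4; lra.
have Hco : forall i : 'I_n, exists l, forall e, 0 < e -> exists N, forall k, (N <= k)%N ->
    `|ys k i 0 - l| < e.
  move=> i; apply: real_cauchy => e e0; have [N HN] := Hcau e e0; exists N => j k Nj Nk.
  have := coord_le (ys j - ys k) i; rewrite !mxE => H'; exact: le_lt_trans H' (HN j k Nj Nk).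
have [fl Hfl] := choice Hco.
pose ystar : V := \col_i fl i.
have Hconv : forall e, 0 < e -> exists N, forall k, (N <= k)%N -> enorm (ys k - ystar) < e.
  move=> e e0.
  have e1 : 0 < e / n.+1%:R by rewrite divr_gt0 // ltr0Sn.
  have [Nf HNf] := choice (fun i => Hfl i _ e1).
  exists (\big[maxn/0%N]_(i < n) Nf i) => k Hk.
  apply: le_lt_trans (enorm_le_sum _) _.
  apply: (@le_lt_trans _ _ (\sum_(i < n) e / n.+1%:R)).
    apply: ler_sum => i _; rewrite !mxE; apply: ltW; apply: HNf.
    apply: (leq_trans _ Hk); exact: leq_bigmax.
  rewrite sumr_const card_ord -(mulr_natr (e / n.+1%:R) n) mulrAC ltr_pdivrMr ?ltr0Sn // ltr_pM2l //.
  by rewrite ltr_nat.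
exists ystar => y; apply: le_trans (Hge y).
rewrite leNgt; apply/negP => Hlt.
have [eps [e0 Ha]] : exists eps, 0 < eps /\ ((m + eps - hq u ystar)%:E < g ystar)%E.
  move: Hlt; rewrite /Hf; case Eg : (g ystar) => [r| |] //.
  - rewrite -EFinD lte_fin => Hlt; exists ((r + hq u ystar - m) / 2).
    by split; [rewrite divr_gt0 //; lra | rewrite lte_fin; lra].
  - by move=> _; exists 1; split => //; exact: ltry.
have [d d0 Hd] := gl Ha.
pose rho := eps * gamma / (2 * (enorm (ystar - u) + 1)).
have a0 := enorm_ge0 (ystar - u).
have rho0 : 0 < rho by rewrite /rho divr_gt0 ?mulr_gt0 //; lra.
have [N1 HN1] := Hconv (Num.min d rho) (ltac:(by rewrite lt_min d0 rho0)).
have [N2 HN2] := eks (eps / 2) (ltac:(by rewrite divr_gt0)).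
have := HN1 (maxn N1 N2) (leq_maxl _ _); rewrite lt_min => /andP[Hkd Hkr].
have := Hd (ys (maxn N1 N2)) Hkd; rewrite Hg lte_fin => Hak.
have Hek := le_lt_trans (ekm _ _ (leq_maxr N1 N2)) HN2.
have Hrk := Hr (maxn N1 N2).
have HX : enorm (ystar - u) * enorm (ys (maxn N1 N2) - ystar) / gamma <= eps / 2.
  have b0 := enorm_ge0 (ys (maxn N1 N2) - ystar).
  apply: (@le_trans _ _ (enorm (ystar - u) * rho / gamma)).
    by rewrite ler_wpM2r ?invr_ge0 ?(ltW g0) // ler_wpM2l // ltW.
  have -> : enorm (ystar - u) * rho / gamma =
      eps / 2 * (enorm (ystar - u) / (enorm (ystar - u) + 1)).
    by rewrite /rho; field; apply/andP; split; rewrite gt_eqF //; lra.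
  rewrite -[leRHS]mulr1 ler_wpM2l ?divr_ge0 ?(ltW e0) //.
  rewrite ler_pdivrMr; lra.
have Hl := hq_lip' g0 HX.
clear -Hl Hak Hrk Hek.
lra.
Qed.
End Prox3.
Lemma le_of_all_t (R : realType) (a b C : R) : 0 <= C ->
  (forall t, 0 < t -> t <= 1 -> a <= b + t * C) -> a <= b.
Proof.
move=> C0 H; rewrite leNgt; apply/negP => ab.
pose t := Num.min 1 ((a - b) / (C + 1)).
have t0 : 0 < t by rewrite lt_min ltr01 divr_gt0 //; lra.
have t1 : t <= 1 by rewrite ge_min lexx.
have := H t t0 t1.
have : t * C <= (a - b) / (C + 1) * C by rewrite ler_wpM2r // ge_min lexx orbT.
have : (a - b) / (C + 1) * C < a - b.
  rewrite mulrAC ltr_pdivrMr; last lra.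
  rewrite ltr_pM2l; lra.
lra.
Qed.

Section Prox4.
Variables (R : realType) (n : nat) (g : 'cV[R]_n -> \bar R) (gamma : R).
Local Notation V := 'cV[R]_n.
Hypotheses (gp : proper_fun g) (gl : lsc g) (gc : convex_fun g) (g0 : 0 < gamma).
Local Notation hq := (@hqf R n gamma).
Local Notation H := (@Hf R n g gamma).
Local Notation prox := (prox gamma g).

Lemma prox_min u y : (H u (prox u) <= H u y)%E.
Proof.
have := xgetPex 0 (prox_ex gp gl gc g0 u); exact.
Qed.

Lemma min_fin u p : (forall y, (H u p <= H u y)%E) -> exists r, g p = r%:E.
Proof.
move=> Hp; have [[x0 Hx0] Hm] := gp.
have := Hp x0; rewrite /Hf; case: (g p) (Hm p) => [r| |] //; first by exists r.
by case: (g x0) Hx0.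
Qed.

Lemma zt_id (u p y : V) t :
  dot (t *: y + (1 - t) *: p - u) (t *: y + (1 - t) *: p - u) =
  dot (p - u) (p - u) + 2 * t * dot (p - u) (y - p) + t ^+ 2 * dot (y - p) (y - p).
Proof.
rewrite /dot !mulr_sumr -!big_split /=; apply: eq_bigr => i _; rewrite !mxE; ring.
Qed.

Lemma vdot_id (u p y : V) : dot (gamma^-1 *: (u - p)) (y - p) = - (gamma^-1 * dot (p - u) (y - p)).
Proof. by rewrite dotZl -mulrN -dotNl opprB. Qed.

Lemma min_subgrad u p : (forall y, (H u p <= H u y)%E) -> subdiff g p (gamma^-1 *: (u - p)).
Proof.
move=> Hp; have [rp Ep] := min_fin Hp.
split; first by rewrite Ep.
move=> y; rewrite Ep; case Ey : (g y) => [r| |]; last 2 first.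
- exact: leey.
- by have := gp.2 y; rewrite Ey.
rewrite -EFinD lee_fin vdot_id.
apply: (@le_of_all_t _ _ _ ((2 * gamma)^-1 * dot (y - p) (y - p))).
  by rewrite mulr_ge0 ?dot_ge0 // invr_ge0 mulr_ge0 // ltW.
move=> t t0 t1.
have Hcv := gc y p (t := t) (ltac:(by rewrite (ltW t0) t1)).
rewrite Ey Ep -!EFinM -EFinD in Hcv.
have := le_trans (Hp (t *: y + (1 - t) *: p)) (leeD2r _ Hcv).
rewrite /Hf Ep -!EFinD lee_fin /hqf !enorm_sq zt_id.
set A := dot (p - u) (y - p); set B := dot (y - p) (y - p); set D := dot (p - u) (p - u).
move=> Hz.
suff : t * (rp - gamma^-1 * A) <= t * (r + t * ((2 * gamma)^-1 * B)) by rewrite ler_pM2l.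
have E1 : (2 * gamma)^-1 * (2 * t * A) = t * (gamma^-1 * A) by field; rewrite gt_eqF.
move: Hz; rewrite !mulrDr E1.
generalize (gamma^-1 * A) (2 * gamma)^-1 => a k.
lra.
Qed.

Lemma key_id (p v y h : V) :
  dot v (y - p) + (2 * gamma)^-1 * dot (y - (p + gamma *: v + h)) (y - (p + gamma *: v + h)) =
  (2 * gamma)^-1 * dot (p - (p + gamma *: v)) (p - (p + gamma *: v)) + dot v h +
  (2 * gamma)^-1 * dot (y - p - h) (y - p - h).
Proof.
rewrite /dot !mulr_sumr -!big_split /=; apply: eq_bigr => i _; rewrite !mxE.
by field; rewrite gt_eqF.
Qed.

Lemma subgrad_key p v : subdiff g p v -> forall y h,
  ((fine (g p) + hq (p + gamma *: v) p + dot v h + (2 * gamma)^-1 * dot (y - p - h) (y - p - h))%:E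
    <= H (p + gamma *: v + h) y)%E.
Proof.
move=> [gf Hs] y h.
have Ep := fineK gf; set rp := fine (g p) in Ep *.
have := Hs y; rewrite -Ep /Hf.
case Ey : (g y) => [r| |] //; last by move=> _; exact: leey.
rewrite -!EFinD !lee_fin /hqf !enorm_sq => H1.
have := key_id p v y h; lra.
Qed.

Lemma prox_sub x v : subdiff g x v -> prox (x + gamma *: v) = x.
Proof.
move=> Hs; set p' := prox (x + gamma *: v).
have := subgrad_key Hs p' 0; rewrite addr0 subr0 dotC dot0l addr0.
move=> /le_trans /(_ (prox_min (x + gamma *: v) x)).
have [gf _] := Hs; rewrite /Hf -(fineK gf) -EFinD lee_fin.
have := dot_ge0 (p' - x).
have k0 : 0 < (2 * gamma)^-1 by rewrite invr_gt0 mulr_gt0.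
move=> d0 Hle.
have : (2 * gamma)^-1 * dot (p' - x) (p' - x) <= 0 by lra.
rewrite pmulr_rle0 // => d1.
by apply/eqP; rewrite -subr_eq0; apply/eqP; apply: dot_eq0; apply/eqP; rewrite eq_le d1 d0.
Qed.

Lemma moreau_val u : moreau gamma g u = H u (prox u).
Proof.
apply/eqP; rewrite eq_le; apply/andP; split.
  by apply: ereal_inf_lbound; exists (prox u).
by apply/ereal_infP => _ [y _ <-]; exact: prox_min.
Qed.
End Prox4.
Lemma aux2 (R : realType) (a E g K N eps : R) : 0 < g -> -(K * N ^+ 2) <= a -> a <= K * N ^+ 2 ->
  0 <= E -> E <= (2 * g)^-1 * N ^+ 2 -> (K + 1) / 2 * N * N <= eps * N ->
  `|2^-1 * a + g * E| <= eps * N.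
Proof.
move=> g0 a1 a2 E0 E1 H.
have : g * E <= g * ((2 * g)^-1 * N ^+ 2) by rewrite ler_wpM2l // ltW.
have -> : g * ((2 * g)^-1 * N ^+ 2) = 2^-1 * N ^+ 2 by field; rewrite gt_eqF.
have := mulr_ge0 (ltW g0) E0.
rewrite ler_norml; move=> *; apply/andP; split; nra.
Qed.

Lemma aux3 (R : realType) (rp q1 b r1 q3 q2 k hh : R) : rp + q1 + b <= r1 + q3 -> r1 + q3 <= rp + q2 ->
  q2 = q1 + b + k * hh ->
  0 <= r1 + q3 - (rp + q1) - b /\ r1 + q3 - (rp + q1) - b <= k * hh.
Proof. move=> *; split; lra. Qed.

Lemma aux4 (R : realType) (rp q1 b r1 q3 x y : R) : 0 <= x * y ->
  0 <= x -> 0 <= y -> (rp + q1 + b + x * y <= r1 + q3) -> rp + q1 + b <= r1 + q3.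
Proof. lra. Qed.

Lemma aux1 (R : realType) (a K e : R) : a * (K + 1) <= 2 * e -> (K + 1) / 2 * a <= e.
Proof. lra. Qed.

Lemma is_grad_unique (R : realType) (n : nat) (f : 'cV[R]_n -> R) x v1 v2 :
  is_grad f x v1 -> is_grad f x v2 -> v1 = v2.
Proof.
move=> H1 H2; case: (eqVneq (v1 - v2) 0) => [/eqP|dn0].
  by rewrite subr_eq0 => /eqP.
exfalso; set d := v1 - v2 in dn0.
have N0 : 0 < enorm d.
  rewrite lt_def enorm_ge0 andbT; apply/eqP => /enorm_eq0 /eqP; exact/negP.
set N := enorm d in N0.
have q0 : 0 < N / 4 by rewrite divr_gt0.
have [d1 d10 Hd1] := H1 _ q0; have [d2 d20 Hd2] := H2 _ q0.
set s := Num.min d1 d2 / 2 / N.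
have s0 : 0 < s by rewrite /s !divr_gt0 // lt_min d10 d20.
have Eh : enorm (s *: d) = Num.min d1 d2 / 2.
  by rewrite enormZ ger0_norm ?(ltW s0) // /s -/N divfK // gt_eqF.
have m0 : 0 < Num.min d1 d2 by rewrite lt_min d10 d20.
have A1 := Hd1 (s *: d) (ltac:(rewrite Eh; apply: (lt_le_trans (y := Num.min d1 d2)); [lra | rewrite ge_min lexx //])).
have A2 := Hd2 (s *: d) (ltac:(rewrite Eh; apply: (lt_le_trans (y := Num.min d1 d2)); [lra | rewrite ge_min lexx orbT //])).
have Ed : dot d (s *: d) = s * N ^+ 2 by rewrite dotZr enorm_sq.
have Ed2 : dot d (s *: d) = dot v1 (s *: d) - dot v2 (s *: d) by rewrite dotBl.
have Enh : enorm (s *: d) = s * N by rewrite enormZ ger0_norm // ltW.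
rewrite Enh in A1 A2.
move: A1 A2; rewrite !ler_norml => /andP[A1 A1'] /andP[A2 A2'].
have sN : 0 < s * N ^+ 2 by rewrite mulr_gt0 // exprn_gt0.
move: Ed Ed2 A1 A1' A2 A2' sN.
generalize (f (x + s *: d) - f x) (dot v1 (s *: d)) (dot v2 (s *: d)) (dot d (s *: d)) => F a b c.
move=> Ed Ed2 A1 A1' A2 A2' sN.
have : s * N ^+ 2 <= N / 4 * (s * N) + N / 4 * (s * N) by lra.
have -> : N / 4 * (s * N) + N / 4 * (s * N) = 2^-1 * (s * N ^+ 2) by field.
lra.
Qed.

Section Grad.
Variables (R : realType) (n : nat) (g : 'cV[R]_n -> \bar R) (gamma : R) (Q : 'M[R]_n) (c : 'cV[R]_n).
Local Notation V := 'cV[R]_n.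
Hypotheses (gp : proper_fun g) (gl : lsc g) (gc : convex_fun g) (g0 : 0 < gamma) (QT : Q^T = Q).
Local Notation hq := (@hqf R n gamma).
Local Notation H := (@Hf R n g gamma).
Local Notation prox := (prox gamma g).

Definition psif (u : V) : R :=
  2^-1 * dot ((Q - 1%:M) *m u) u + dot c u + gamma * fine (moreau gamma g u).

Lemma hq_shift u p h : hq (u + h) p = hq u p + dot (gamma^-1 *: (u - p)) h + (2 * gamma)^-1 * dot h h.
Proof.
rewrite /hqf !enorm_sq /dot !mulr_sumr -!big_split /=; apply: eq_bigr => i _; rewrite !mxE.
by field; rewrite gt_eqF.
Qed.

Lemma psi_grad u : is_grad psif u (Q *m u + c - prox u).
Proof.
move=> eps e0.
have [K K0 HK] := mx_bound (Q - 1%:M).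
have K1 : 0 < K + 1 by rewrite ltr_wpDl.
exists (2 * eps / (K + 1)); first by rewrite divr_gt0 ?mulr_gt0.
move=> h hh.
set p := prox u; set p1 := prox (u + h); set v := gamma^-1 *: (u - p).
have [rp Ep] := min_fin gp (prox_min gp gl gc g0 u).
have [r1 E1] := min_fin gp (prox_min gp gl gc g0 (u + h)).
have M0 : fine (moreau gamma g u) = rp + hq u p by rewrite (moreau_val gp gl gc g0 u) /Hf -/p Ep.
have M1 : fine (moreau gamma g (u + h)) = r1 + hq (u + h) p1 by rewrite (moreau_val gp gl gc g0 (u + h)) /Hf -/p1 E1.
have Qu : Q *m u = (Q - 1%:M) *m u + u by rewrite mulmxBl mul1mx subrK.
have gv : gamma * dot v h = dot u h - dot p h by rewrite /v dotZl mulrA mulfV ?gt_eqF ?mul1r // dotBl.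
have sym : dot ((Q - 1%:M) *m h) u = dot ((Q - 1%:M) *m u) h.
  by rewrite dot_mx linearB /= trmx1 QT dotC.
rewrite /psif M0 M1 mulmxDr !dotDl !dotDr sym Qu !dotDl dotNl.
set X := _ - _ - _.
have EX : X = 2^-1 * dot ((Q - 1%:M) *m h) h + gamma * (r1 + hq (u + h) p1 - (rp + hq u p) - dot v h).
  rewrite /X mulrBr mulrBr gv; lra.
rewrite EX; clear X EX.
have Up : r1 + hq (u + h) p1 <= rp + hq (u + h) p.
  by have := prox_min gp gl gc g0 (u + h) p; rewrite /Hf -/p1 E1 Ep -!EFinD lee_fin.
have Lo : rp + hq u p + dot v h <= r1 + hq (u + h) p1.
  have Hs := min_subgrad gp gc g0 (prox_min gp gl gc g0 u).
  have Eu : p + gamma *: v = u.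
    by rewrite /v scalerA mulfV ?gt_eqF // scale1r addrC subrK.
  have := subgrad_key g0 Hs p1 h; rewrite -/v Eu /Hf -/p1 E1 Ep /= -EFinD lee_fin.
  have := dot_ge0 (p1 - p - h).
  have : 0 <= (2 * gamma)^-1 by rewrite invr_ge0 mulr_ge0 // ltW.
  move=> k0 d0 ineq; exact: (aux4 (mulr_ge0 k0 d0) k0 d0 ineq).
have Sh := hq_shift u p h.
have [EB1 EB2] := aux3 Lo Up Sh.
have Hb : `|dot ((Q - 1%:M) *m h) h| <= K * dot h h.
  apply: (le_trans (cs _ _)); rewrite -enorm_sq expr2 mulrA.
  by apply: ler_wpM2r; [exact: enorm_ge0 | exact: HK].
have hn := enorm_ge0 h.
have Hh : (K + 1) / 2 * enorm h <= eps.
  have H' : enorm h * (K + 1) <= 2 * eps by rewrite -ler_pdivlMr // ltW.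
  exact: aux1.
have Hh2 := ler_wpM2r hn Hh.
rewrite -enorm_sq in Hb EB2.
move: Hb; rewrite ler_norml => /andP[Hb1 Hb2].
exact: aux2 g0 Hb1 Hb2 EB1 EB2 Hh2.
Qed.

Lemma grad_psi u : grad psif u = Q *m u + c - prox u.
Proof.
have Hx := xgetPex 0 (ex_intro (fun v => is_grad psif u v) _ (psi_grad u)).
exact: is_grad_unique Hx (psi_grad u).
Qed.
End Grad.
Unset Implicit Arguments.
Lemma scalemxAl' (R : realType) m k p (a : R) (A : 'M[R]_(m, k)) (B : 'M[R]_(k, p)) :
  (a *: A) *m B = a *: (A *m B).
Proof. by rewrite scalemxAl. Qed.
Lemma scalemxAr' (R : realType) m k p (a : R) (A : 'M[R]_(m, k)) (B : 'M[R]_(k, p)) :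
  A *m (a *: B) = a *: (A *m B).
Proof. by rewrite scalemxAr. Qed.

Theorem lemma5p9 (R : realType) (n : nat) (A : 'M[R]_n) (b : 'cV[R]_n)
  (g : 'cV[R]_n -> \bar R) (gamma : R) :
  sym_mx A -> psd A ->
  proper_fun g -> lsc g -> convex_fun g ->
  0 < gamma -> pd (1%:M - gamma *: A) ->
  let Q := invmx (1%:M - gamma *: A) in
  let c := gamma *: (Q *m b) in
  let P := Q - 1%:M in
  let psi := fun u : 'cV[R]_n =>
    2^-1 * dot (P *m u) u + dot c u + gamma * fine (moreau gamma g u) in
  forall u w z : 'cV[R]_n,
    hess2 psi u w z <->
    sub2diff g (prox gamma g u) (gamma^-1 *: (u - prox gamma g u))
      (Q *m w - z) (gamma^-1 *: (z - P *m w)).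
Proof.
move=> hA _ gp gl gc g0 _ Q c P psi u w z.
have QT : Q^T = Q.
  by rewrite /Q trmx_inv linearB /= trmx1 linearZ /= hA.
have gn0 : gamma != 0 by rewrite gt_eqF.
have hgrad : forall x, grad psi x = Q *m x + c - prox gamma g x.
  exact: (grad_psi c gp gl gc g0 QT).
pose F := fun p : 'cV[R]_n * 'cV[R]_n =>
  (Q *m p.1 + c - p.2, gamma^-1 *: (p.1 - (Q *m p.1 + c - p.2))).
pose G := fun p : 'cV[R]_n * 'cV[R]_n =>
  (p.1 + gamma *: p.2, Q *m (p.1 + gamma *: p.2) + c - p.1).
pose Om := [set p : 'cV[R]_n * 'cV[R]_n | p.2 = grad psi p.1].
pose Om' := [set p : 'cV[R]_n * 'cV[R]_n | subdiff g p.1 p.2].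
have sub_id : forall a b : 'cV[R]_n, a - (a - b) = b.
  by move=> a0 b0; rewrite opprB addrC subrK.
have sc_id : forall a : 'cV[R]_n, gamma *: (gamma^-1 *: a) = a.
  by move=> a0; rewrite scalerA mulfV // scale1r.
have sc_id' : forall a : 'cV[R]_n, gamma^-1 *: (gamma *: a) = a.
  by move=> a0; rewrite scalerA mulVf // scale1r.
have HF : forall z, Om z -> Om' (F z).
  move=> [x y]; rewrite /Om /Om' /F /= => ->; rewrite hgrad sub_id.
  exact (min_subgrad gp gc g0 (prox_min gp gl gc g0 x)).
have HG : forall z, Om' z -> Om (G z).
  move=> [x v]; rewrite /Om /Om' /G /= => Hs; rewrite hgrad (prox_sub gp gl gc g0 Hs) //.
have GF : forall z, G (F z) = z.
  move=> [x y]; rewrite /G /F /= sc_id addrC subrK sub_id //.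
have FG : forall z, F (G z) = z.
  move=> [x v]; rewrite /G /F /= sub_id addrC addKr sc_id' //.
have Glin : forall a b, sub2 (G a) (G b) =
    blk 1%:M (gamma *: 1%:M) (Q - 1%:M) (gamma *: Q) (sub2 a b).
  move=> [a1 a2] [b1 b2]; rewrite /blk /sub2 /G /=; congr pair;
  rewrite !(mulmxDl, mulmxDr, mulmxBl, mulmxBr, mulNmx, mulmxN, mul1mx, mulmx1, scalemxAl', scalemxAr');
  apply/matrixP => i j; rewrite !mxE; ring.
have Flin : forall a b, sub2 (F a) (F b) =
    blk Q (- 1%:M) (gamma^-1 *: (1%:M - Q)) (gamma^-1 *: 1%:M) (sub2 a b).
  move=> [a1 a2] [b1 b2]; rewrite /blk /sub2 /F /=; congr pair;
  rewrite !(mulmxDl, mulmxDr, mulmxBl, mulmxBr, mulNmx, mulmxN, mul1mx, mulmx1, scalemxAl', scalemxAr');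
  apply/matrixP => i j; rewrite !mxE; ring.
have ig0 : 0 < gamma^-1 by rewrite invr_gt0.
rewrite /hess2 /sub2diff /coderiv; split => Hl.
- have := lim_transfer ig0 HF HG GF Glin Flin Hl.
  have -> : F (u, grad psi u) = (prox gamma g u, gamma^-1 *: (u - prox gamma g u)).
    by rewrite /F /= hgrad sub_id.
  have -> : blkT gamma^-1 1%:M (gamma *: 1%:M) (Q - 1%:M) (gamma *: Q) (z, - w) =
      (gamma^-1 *: (z - P *m w), - (Q *m w - z)).
    rewrite /blkT /blk /= /P !linearB /= !linearZ /= trmx1 QT; congr pair;
    rewrite !(mulmxDl, mulmxDr, mulmxBl, mulmxBr, mulNmx, mulmxN, mul1mx, mulmx1, scalemxAl', scalemxAr');
    apply/matrixP => i j; rewrite !mxE; by field.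
  by [].
- have := lim_transfer g0 HG HF FG Flin Glin Hl.
  have -> : G (prox gamma g u, gamma^-1 *: (u - prox gamma g u)) = (u, grad psi u).
    by rewrite /G /= sc_id addrC subrK hgrad.
  have -> : blkT gamma Q (- 1%:M) (gamma^-1 *: (1%:M - Q)) (gamma^-1 *: 1%:M)
      (gamma^-1 *: (z - P *m w), - (Q *m w - z)) = (z, - w).
    rewrite /blkT /blk /= /P !linearZ /= !linearB /= !linearN /= !trmx1 QT; congr pair;
    rewrite !(mulmxDl, mulmxDr, mulmxBl, mulmxBr, mulNmx, mulmxN, mul1mx, mulmx1, scalemxAl', scalemxAr');
    apply/matrixP => i j; rewrite !mxE; by field.
  by [].
Qed.
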